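(* For every connected graph $G$, $\tau(G)\leq \left\lceil \tfrac{1}{2}(\operatorname{dll}(G)+1)\,\operatorname{p}(G)\right\rceil$.
   Context: For an integer $k\geq 0$, the $k$-daddy-longlegs $W^{(k)}$ is the tree with vertex set $\{r,u_1,\dots,u_k,v_1,\dots,v_k\}$ and edge set $\{ru_i,u_iv_i:i\in\{1,\dots,k\}\}$ (so $W^{(0)}$ is a single vertex). The daddy-longlegs number $\operatorname{dll}(G)$ is the maximum $k\geq 0$ such that $W^{(k)}$ is a minor of $G$. The path number $\operatorname{p}(G)$ is the maximum $n$ such that $G$ contains a path on $n$ vertices. The vertex cover number $\tau(G)$ is the minimum size of a set $A\subseteq V(G)$ such that $V(G)\setminus A$ is an independent set. *)

(* Defs.v *)
From mathcomp Require Import all_boot.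
Set Implicit Arguments. Unset Strict Implicit. Unset Printing Implicit Defensive.

Definition simple_graph (T : finType) (e : rel T) : Prop :=
  symmetric e /\ irreflexive e.

Definition connected_graph (T : finType) (e : rel T) : bool :=
  [forall x, forall y, connect e x y].

Definition induced (T : finType) (e : rel T) (A : {set T}) : rel T :=
  fun x y => [&& x \in A, y \in A & e x y].

Definition connected_set (T : finType) (e : rel T) (A : {set T}) : bool :=
  (A != set0) && [forall x in A, forall y in A, connect (induced e A) x y].

Definition minorb (U T : finType) (f : rel U) (e : rel T) : bool :=
  [exists phi : {ffun U -> {set T}},
    [&& [forall u, connected_set e (phi u)],
        [forall u, forall v, (u != v) ==> [disjoint phi u & phi v]] &
        [forall u, forall v, f u v ==>
           [exists x in phi u, exists y in phi v, e x y]]]].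

(* The k-daddy-longlegs W^(k): vertices r = None, u_i = Some (inl i),
   v_i = Some (inr i); edges r u_i and u_i v_i. *)
Definition dll_vertex (k : nat) : finType := option ('I_k + 'I_k)%type.

Definition dll_edge (k : nat) : rel (dll_vertex k) :=
  fun a b =>
    match a, b with
    | None, Some (inl _) => true
    | Some (inl _), None => true
    | Some (inl i), Some (inr j) => i == j
    | Some (inr j), Some (inl i) => i == j
    | _, _ => false
    end.

(* dll(G): maximum k with W^(k) a minor of G (W^(k) has 2k+1 vertices, so
   k <= #|T| whenever it is a minor). *)
Definition dll (T : finType) (e : rel T) : nat :=
  \max_(k < #|T|.+1 | minorb (@dll_edge k) e) k.

Definition gpath (T : finType) (e : rel T) (s : seq T) : bool :=
  uniq s && (if s is x :: s' then path e x s' else true).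

Definition path_number (T : finType) (e : rel T) : nat :=
  \max_(n < #|T|.+1 | [exists s : n.-tuple T, gpath e s]) n.

Definition vertex_cover (T : finType) (e : rel T) (A : {set T}) : bool :=
  [forall x, forall y, e x y ==> (x \in A) || (y \in A)].

Definition tau (T : finType) (e : rel T) : nat :=
  \big[minn/#|T|]_(A : {set T} | vertex_cover e A) #|A|.

Definition ceil_half (m : nat) : nat := m.+1 %/ 2.

(* Main.v *)
Require Import Defs.
From mathcomp Require Import all_boot.
From mathcomp Require Import zify.
Set Implicit Arguments. Unset Strict Implicit. Unset Printing Implicit Defensive.

Section Aux.
Variables (T : finType) (e : rel T).
Hypothesis esym : symmetric e.
Hypothesis eirr : irreflexive e.

Lemma gpath_rev s : gpath e s -> gpath e (rev s).
Proof.
case: s => [|x p] //; rewrite /gpath => /andP[u pp]; rewrite rev_uniq u /=.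
rewrite (lastI x p) rev_rcons /= rev_path.
by rewrite (@eq_path _ _ e) // => a b; rewrite /= esym.
Qed.

Lemma gpath_cat x1 t1 x2 t2 : gpath e (x1 :: t1) -> gpath e (x2 :: t2) ->
  e (last x1 t1) x2 -> uniq ((x1 :: t1) ++ (x2 :: t2)) ->
  gpath e ((x1 :: t1) ++ (x2 :: t2)).
Proof.
rewrite /gpath => /andP[_ p1] /andP[_ p2] ex u; rewrite u /=.
by rewrite cat_path p1 /= ex.
Qed.

Lemma gpath_size s : gpath e s -> size s <= path_number e.
Proof.
move=> gp; have us : uniq s by case/andP: gp.
have lt : size s < #|T|.+1 by rewrite ltnS -(card_uniqP us) max_card.
rewrite /path_number.
apply: (@leq_bigmax_cond _ (fun n : 'I_#|T|.+1 => [exists t : n.-tuple T, gpath e t])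
   (fun n => nat_of_ord n) (Ordinal lt)).
by apply/existsP; exists (in_tuple s).
Qed.

Lemma tau_le C : vertex_cover e C -> tau e <= #|C|.
Proof.
move=> vc; rewrite /tau.
have : C \in index_enum {set T} by rewrite mem_index_enum.
elim: (index_enum _) => [|a s IH] //; rewrite inE big_cons.
case/orP=> [/eqP <-|Cs]; first by rewrite vc geq_minl.
case: ifP => _; last exact: IH.
by rewrite geq_min IH ?orbT.
Qed.

Lemma dll_le m : minorb (@dll_edge m) e -> m <= #|T| -> m <= dll e.
Proof.
move=> mi lt; rewrite -ltnS in lt; rewrite /dll.
exact: (@leq_bigmax_cond _ (fun k : 'I_#|T|.+1 => minorb (@dll_edge k) e)
   (fun n => nat_of_ord n) (Ordinal lt)).
Qed.

End Aux.
Section Conn.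
Variables (T : finType) (e : rel T).
Hypothesis esym : symmetric e.

Lemma induced_sym D : symmetric (induced e D).
Proof. by move=> x y; rewrite /induced esym andbCA. Qed.

Lemma induced_mono (D1 D2 : {set T}) x y : D1 \subset D2 ->
  connect (induced e D1) x y -> connect (induced e D2) x y.
Proof.
move=> sD; apply: connect_sub => u v /and3P[uD vD uv]; apply: connect1.
by rewrite /induced (subsetP sD u uD) (subsetP sD v vD) uv.
Qed.

Lemma induced_mem (D : {set T}) x y : connect (induced e D) x y -> x \in D -> y \in D.
Proof.
move=> /connectP[p pp ->]; elim: p x pp => //= a p IH x /andP[/and3P[_ aD _] pp] _.
exact: IH.
Qed.

Lemma comp_restrict (D : {set T}) w z : connect (induced e D) w z ->
  connect (induced e [set y in D | connect (induced e D) w y]) w z.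
Proof.
move=> /connectP[p pp ->]; apply/connectP; exists p => //.
set K := [set y in D | connect (induced e D) w y].
have gen : forall u, connect (induced e D) w u -> path (induced e D) u p ->
    path (induced e K) u p.
  elim: p {pp} => //= a p IH u cu /andP[eu pp]; apply/andP; split.
    have ca : connect (induced e D) w a by apply: connect_trans cu (connect1 eu).
    case/and3P: eu => uD aD ua; by rewrite /induced !inE uD aD ua cu ca.
  by apply: IH => //; apply: connect_trans cu (connect1 eu).
exact: gen (connect0 _ _) pp.
Qed.

Lemma escape (A : {set T}) r z : z \in A -> z != r -> connect (induced e A) r z ->
  exists2 w, induced e A r w & (w != r) && connect (induced e (A :\ r)) w z.
Proof.
move=> zA zr /connectP[p pp lz].
have H : forall u s, path (induced e A) u s -> last u s = z -> u \in A ->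
  (exists2 w, induced e A r w & (w != r) && connect (induced e (A :\ r)) w z)
  \/ ((u != r) && connect (induced e (A :\ r)) u z).
  move=> u s; elim: s u => [|v s IH] u /=.
    by move=> _ -> _; right; rewrite zr connect0.
  move=> /andP[uv ps] ls uA.
  have vA : v \in A by case/and3P: uv.
  case: (IH v ps ls vA) => [L|/andP[vr cv]]; first by left.
  case: (eqVneq u r) => [ur|ur].
    by left; exists v; [rewrite -ur | rewrite vr cv].
  right => /=; apply: connect_trans cv; apply: connect1.
  case/and3P: uv => _ _ uv; by rewrite /induced !inE ur uA vr vA uv.
have rA : r \in A.
  case: p pp lz => [|a p] /=; first by move=> _ zr'; rewrite -zr' eqxx in zr.
  by case/andP=> /and3P[].
by case: (H r p pp (sym_eq lz) rA) => // /andP[]; rewrite eqxx.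
Qed.

End Conn.
Definition verts (T : Type) (legs : seq (T * T)) : seq T :=
  flatten [seq [:: l.1; l.2] | l <- legs].

Lemma size_verts (T : Type) (legs : seq (T * T)) : size (verts legs) = (size legs).*2.
Proof. by elim: legs => //= l legs IH; rewrite IH doubleS. Qed.

Lemma nth_verts (T : Type) (x0 : T) (legs : seq (T * T)) i : i < size legs ->
  nth x0 (verts legs) i.*2 = (nth (x0, x0) legs i).1 /\
  nth x0 (verts legs) i.*2.+1 = (nth (x0, x0) legs i).2.
Proof.
elim: legs i => [|l legs IH] [|i] //= lt.
by apply: IH.
Qed.

Lemma mem_verts (T : eqType) (legs : seq (T * T)) l : l \in legs ->
  (l.1 \in verts legs) && (l.2 \in verts legs).
Proof.
elim: legs => //= a legs IH; rewrite inE => /orP[/eqP->|/IH/andP[h1 h2]].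
  by rewrite !inE !eqxx orbT.
by rewrite !mem_cat h1 h2 !orbT.
Qed.

Section Minor.
Variables (T : finType) (e : rel T).
Hypothesis esym : symmetric e.

Lemma spider_minor (S : {set T}) r (legs : seq (T * T)) :
  r \in S -> (forall x, x \in S -> connect (induced e S) r x) ->
  uniq (verts legs) -> (forall x, x \in verts legs -> x \notin S) ->
  (forall l, l \in legs -> e l.1 l.2) ->
  (forall l, l \in legs -> exists2 x, x \in S & e x l.1) ->
  minorb (@dll_edge (size legs)) e.
Proof.
move=> rS cS uv vS el aS.
pose m := size legs.
pose lv (u : 'I_m + 'I_m) : T :=
  match u with inl i => nth r (verts legs) (nat_of_ord i).*2
             | inr i => nth r (verts legs) (nat_of_ord i).*2.+1 end.
pose idx (u : 'I_m + 'I_m) : nat :=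
  match u with inl i => (nat_of_ord i).*2 | inr i => (nat_of_ord i).*2.+1 end.
have idx_lt u : idx u < size (verts legs).
  by rewrite size_verts; case: u => i /=; have := ltn_ord i; rewrite -!muln2; lia.
have lvE u : lv u = nth r (verts legs) (idx u) by case: u.
have lv_inj u v : (lv u == lv v) = (u == v).
  have idx_inj : injective idx.
    by case=> [i|i] [j|j] /= H; rewrite -!muln2 in H; try lia;
      congr (_ _); apply: val_inj => /=; lia.
  by rewrite !lvE nth_uniq ?idx_lt //; apply/eqP/eqP => [/idx_inj|->].
have lvS u : lv u \notin S by rewrite lvE; apply: vS; apply: mem_nth.
have csym : connect_sym (induced e S).
  by apply: sym_connect_sym => x y; rewrite /induced esym andbCA.
have legE (i : 'I_m) : [/\ nth (r, r) legs i \in legs,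
    lv (inl i) = (nth (r, r) legs i).1 & lv (inr i) = (nth (r, r) legs i).2].
  by have [h1 h2] := nth_verts r (ltn_ord i); split => //; apply: mem_nth.
apply/existsP; exists [ffun u : dll_vertex m =>
   match u with None => S | Some w => [set lv w] end].
apply/and3P; split.
- apply/forallP => -[w|]; rewrite ffunE /connected_set.
    apply/andP; split; first by apply/set0Pn; exists (lv w); rewrite inE.
    by apply/forall_inP => x /set1P ->; apply/forall_inP => y /set1P ->; exact: connect0.
  apply/andP; split; first by apply/set0Pn; exists r.
  apply/forall_inP => x xS; apply/forall_inP => y yS.
  by apply: connect_trans (cS _ yS); rewrite csym; apply: cS.
- apply/forallP => u; apply/forallP => v; apply/implyP => uvn.
  case: u uvn => [a|]; case: v => [b|] //= uvn; rewrite !ffunE.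
  + by rewrite disjoints1 inE lv_inj.
  + by rewrite disjoints1.
  + by rewrite disjoint_sym disjoints1.
- apply/forallP => u; apply/forallP => v; apply/implyP.
  case: u => [[i|i]|]; case: v => [[j|j]|] //= ij; rewrite !ffunE.
  + move/eqP: ij => <-; have [li -> ->] := legE i.
    by apply/existsP; exists (nth (r, r) legs i).1; rewrite inE eqxx /=;
      apply/existsP; exists (nth (r, r) legs i).2; rewrite inE eqxx el.
  + have [li -> _] := legE i; have [x xS ex] := aS _ li.
    apply/existsP; exists (nth (r, r) legs i).1; rewrite inE eqxx /=.
    by apply/existsP; exists x; rewrite xS esym.
  + move/eqP: ij => ->; have [li -> ->] := legE i.
    by apply/existsP; exists (nth (r, r) legs i).2; rewrite inE eqxx /=;
      apply/existsP; exists (nth (r, r) legs i).1; rewrite inE eqxx esym el.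
  + have [li -> _] := legE j; have [x xS ex] := aS _ li.
    apply/existsP; exists x; rewrite xS /=.
    by apply/existsP; exists (nth (r, r) legs j).1; rewrite inE eqxx.
Qed.
End Minor.
Section Main.
Variables (T : finType) (e : rel T).
Hypothesis esym : symmetric e.
Hypothesis eirr : irreflexive e.

Record spider (A : {set T}) (r : T) (C S : {set T}) (legs : seq (T * T)) (s : seq T) : Prop := Spider {
  sC_sub : C \subset A;
  sC_r : r \in C;
  sC_cov : forall x y, x \in A -> y \in A -> e x y -> (x \in C) || (y \in C);
  sS_sub : S \subset A;
  sS_conn : S != set0 -> r \in S /\ (forall x, x \in S -> connect (induced e S) r x);
  sS_empty : S = set0 -> C \subset [set r] /\ exists x, legs = [:: (r, x)];
  slegs_uniq : uniq (verts legs);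
  slegs_sub : forall x, x \in verts legs -> (x \in A) && (x \notin S);
  slegs_edge : forall l, l \in legs -> e l.1 l.2;
  slegs_att : S != set0 -> forall l, l \in legs -> exists2 x, x \in S & e x l.1;
  slegs_pos : 0 < size legs;
  spath_g : gpath e (r :: s);
  spath_sub : {subset s <= A};
  spath_pos : 0 < size s;
  sineq : 2 * #|C| + 3 * (size legs).-1 <= 2 * size s + (size legs).-1 * path_number e
}.

Definition rooted (A : {set T}) (r : T) : Prop :=
  A = [set r] \/ exists C S legs s, spider A r C S legs s.

Lemma gpath_rcons_cat s1 y x2 t2 : gpath e (rcons s1 y) -> gpath e (x2 :: t2) ->
  e y x2 -> uniq (rcons s1 y ++ x2 :: t2) -> gpath e (rcons s1 y ++ x2 :: t2).
Proof.
rewrite /gpath => /andP[_ p1] /andP[_ p2] ex u; rewrite u /=.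
case: s1 p1 {u} => [|a s1] /= p1; first by rewrite ex.
by rewrite cat_path p1 last_rcons /= ex.
Qed.

Lemma verts_cat (l1 l2 : seq (T * T)) : verts (l1 ++ l2) = verts l1 ++ verts l2.
Proof. by rewrite /verts map_cat flatten_cat. Qed.


Lemma ar1 c c' m h p : c' <= c.+1 -> 2 * c + 3 * m <= 2 * h + m * p ->
  2 * c' + 3 * m <= 2 * h.+1 + m * p.
Proof. lia. Qed.

Lemma ar2 c c1 c2 a b h1 h2 p : c <= c1 + c2 -> 2 * c1 + 3 * a <= 2 * h1 + a * p ->
  2 * c2 + 3 * b <= 2 * h2 + b * p -> h2.+1 + h1.+1 <= p ->
  2 * c + 3 * (a + b).+1 <= 2 * (maxn h1 h2.+1) + (a + b).+1 * p.
Proof. nia. Qed.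

Lemma gpath_ext r x s : gpath e (x :: s) -> e r x -> r \notin x :: s -> gpath e (r :: x :: s).
Proof.
by rewrite /gpath => /andP[u pth] erx rn; rewrite /= erx pth rn; move: u => /= /andP[-> ->].
Qed.

Lemma predD a b : 0 < a -> 0 < b -> (a + b).-1 = (a.-1 + b.-1).+1.
Proof. lia. Qed.

Lemma rooted_all n : forall (A : {set T}) (r : T), #|A| <= n -> r \in A ->
  (forall z, z \in A -> connect (induced e A) r z) -> rooted A r.
Proof.
elim: n => [|n IH] A r cA rA cAr.
  have : 0 < #|A| by apply/card_gt0P; exists r.
  by rewrite leqn0 in cA; rewrite (eqP cA).
case: (eqVneq A [set r]) => [->|nA]; first by left.
have [y yAr] : exists y, y \in A :\ r.
  apply/set0Pn; apply: contra_neq nA => H.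
  by rewrite -(setD1K rA) H setU0.
move: yAr; rewrite !inE => /andP[yr yA].
have [x erx /andP[xr cxy]] := escape yA yr (cAr y yA).
have xA : x \in A by case/and3P: erx.
have erx' : e r x by case/and3P: erx.
pose B := [set z in A :\ r | connect (induced e (A :\ r)) x z].
pose A' := A :\: B.
have csym : connect_sym (induced e (A :\ r)) by apply: sym_connect_sym; apply: induced_sym.
have xB : x \in B by rewrite !inE xr xA connect0.
have rB : r \notin B by rewrite !inE eqxx.
have BA : B \subset A.
  by apply/subsetP => z; rewrite !inE => /andP[/andP[_ ->]].
have rA' : r \in A' by rewrite in_setD rB rA.
have A'A : A' \subset A by apply: subsetDl.
have cB : #|B| <= n.
  have pB : B \proper A by apply/properP; split => //; exists r.
  by rewrite -ltnS; apply: leq_trans (proper_card pB) cA.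
have cA' : #|A'| <= n.
  have pA : A' \proper A by apply/properP; split => //; exists x => //; rewrite in_setD xB.
  by rewrite -ltnS; apply: leq_trans (proper_card pA) cA.
have noedge : forall y z, y \in B -> z \in A -> z != r -> e y z -> z \in B.
  move=> y' z; rewrite !inE => /andP[/andP[y'r y'A] cy] zA zr ey.
  rewrite zr zA /=; apply: connect_trans cy (connect1 _).
  by rewrite /induced !inE y'r y'A zr zA ey.
have connB : forall z, z \in B -> connect (induced e B) x z.
  by move=> z; rewrite inE => /andP[_ cz]; apply: comp_restrict.
have connA' : forall z, z \in A' -> connect (induced e A') r z.
  move=> z; rewrite in_setD => /andP[zB zA].
  case: (eqVneq z r) => [->|zr]; first exact: connect0.
  have [w erw /andP[wr cwz]] := escape zA zr (cAr z zA).
  have wA : w \in A by case/and3P: erw.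
  have wB : w \notin B.
    apply: contra zB; rewrite !inE => /andP[_ cxw].
    rewrite zr zA /=; exact: connect_trans cxw cwz.
  apply: connect_trans (connect1 (_ : induced e A' r w)) _.
    by case/and3P: erw => _ _ ew; rewrite /induced !in_setD rB rA wB wA ew.
  apply: induced_mono (comp_restrict cwz).
  apply/subsetP => u; rewrite !inE => /andP[/andP[ur uA] cwu]; rewrite uA andbT ur /=.
  apply: contra wB => cxu; rewrite !inE wr wA /=.
  by apply: connect_trans cxu _; rewrite csym.
have inA' : forall z, z \in A -> z \notin B -> z \in A' by move=> z zA zB; rewrite in_setD zA zB.
have A'B : forall z, z \in A' -> z \notin B by move=> z; rewrite in_setD => /andP[].
have covsplit : forall C : {set T}, r \in C ->
    (forall y z, y \in A' -> z \in A' -> e y z -> (y \in C) || (z \in C)) ->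
    (forall y z, y \in B -> z \in B -> e y z -> (y \in C) || (z \in C)) ->
    forall y z, y \in A -> z \in A -> e y z -> (y \in C) || (z \in C).
  move=> C rC cA'C cBC y' z yA' zA eyz.
  case: (boolP (y' \in B)) => yB; case: (boolP (z \in B)) => zB.
  - exact: cBC.
  - case: (eqVneq z r) => [->|zr]; first by rewrite rC orbT.
    by rewrite (noedge _ _ yB zA zr eyz) in zB.
  - case: (eqVneq y' r) => [->|yr']; first by rewrite rC.
    by rewrite esym in eyz; rewrite (noedge _ _ zB yA' yr' eyz) in yB.
  - by apply: cA'C => //; apply: inA'.
have subA : forall z, z \in A' -> z \in A by move=> z /(subsetP A'A).
have subB : forall z, z \in B -> z \in A by move=> z /(subsetP BA).
have star : forall CB SB lB sB, spider B x CB SB lB sB ->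
    (forall y z, y \in A' -> z \in A' -> e y z -> (y == r) || (z == r)) -> rooted A r.
  move=> CB SB lB sB [h1 h2 h3 h4 h5 h6 h7 h8 h9 h10 h11 h12 h13 h14 h15] st.
  right; exists (r |: CB), (r |: SB), lB, (x :: sB); split => //.
  + by apply/subsetP => z; rewrite in_setU1 => /orP[/eqP->//|/(subsetP h1)/subB].
  + by rewrite setU11.
  + apply: covsplit; first by rewrite setU11.
      by move=> y' z yA' zA' /(st _ _ yA' zA') /orP[]/eqP->; rewrite setU11 ?orbT.
    by move=> y' z yB zB /(h3 _ _ yB zB) /orP[] H; rewrite !in_setU1 H ?orbT.
  + by apply/subsetP => z; rewrite in_setU1 => /orP[/eqP->//|/(subsetP h4)/subB].
  + move=> _; split; first by rewrite setU11.
    move=> z; rewrite in_setU1 => /orP[/eqP->|zS]; first exact: connect0.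
    have SB0 : SB != set0 by apply/set0Pn; exists z.
    have [xS cS] := h5 SB0.
    apply: connect_trans (connect1 (_ : induced e (r |: SB) r x)) _.
      by rewrite /induced setU11 in_setU1 xS orbT erx'.
    by apply: induced_mono (cS _ zS); apply: subsetUr.
  + by move/setP/(_ r); rewrite setU11 inE.
  + move=> z /h8 /andP[zB zS]; rewrite subB //= in_setU1 negb_or zS andbT.
    by apply: contraNneq rB => <-.
  + move=> _ l ll; case: (eqVneq SB set0) => [SB0|SB0].
      have [_ [x0 lBE]] := h6 SB0; move: ll; rewrite lBE inE => /eqP -> /=.
      by exists r; rewrite ?setU11.
    by have [y' yS ey] := h10 SB0 l ll; exists y'; rewrite // in_setU1 yS orbT.
  + move: h12; rewrite /gpath => /andP[u pth].
    have rn : r \notin x :: sB.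
      rewrite inE negb_or eq_sym xr /=; apply/negP => /h13 rB'.
      by rewrite rB' in rB.
    by rewrite /= erx' pth rn; move: u => /= /andP[-> ->].
  + by move=> z; rewrite inE => /orP[/eqP->//|/h13/subB].
  + by apply: ar1 h15; rewrite cardsU1; case: (r \notin CB).
have [AT|[C' [S' [l' [s' sp']]]]] := IH A' r cA' rA' connA';
  have [BT|[CB [SB [lB [sB spB]]]]] := IH B x cB xB connB.
-
  right; exists [set r], set0, [:: (r, x)], [:: x]; split => //.
  + by apply/subsetP => z /set1P ->.
  + by rewrite inE.
  + apply: covsplit; first by rewrite inE.
      by move=> y' z; rewrite AT => /set1P -> /set1P ->; rewrite eirr.
    by move=> y' z; rewrite BT => /set1P -> /set1P ->; rewrite eirr.
  + by rewrite sub0set.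
  + by rewrite eqxx.
  + by move=> _; split => //; exists x.
  + by rewrite /verts /= inE eq_sym xr.
  + by move=> z; rewrite /verts /= !inE andbT => /orP[/eqP->|/eqP->].
  + by move=> l; rewrite inE => /eqP ->.
  + by rewrite eqxx.
  + by rewrite /gpath /= inE eq_sym xr erx'.
  + by move=> z; rewrite inE => /eqP ->.
  + by rewrite cards1.
- apply: (star _ _ _ _ spB) => y' z; rewrite AT => /set1P -> _ _.
  by rewrite eqxx.
- right; exists C', S', l', s'.
  case: sp' => [h1 h2 h3 h4 h5 h6 h7 h8 h9 h10 h11 h12 h13 h14 h15]; split => //.
  + exact: subset_trans h1 A'A.
  + apply: covsplit => //.
    by move=> y' z; rewrite BT => /set1P -> /set1P ->; rewrite eirr.
  + exact: subset_trans h4 A'A.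
  + by move=> z /h8 /andP[/subA -> ->].
  + by move=> z /h13 /subA.
- case: sp' => [h1 h2 h3 h4 h5 h6 h7 h8 h9 h10 h11 h12 h13 h14 h15].
  case: (eqVneq S' set0) => [S0|S0].
    apply: (star _ _ _ _ spB) => y' z yA1 zA1 eyz.
    have [sC _] := h6 S0.
    by case/orP: (h3 _ _ yA1 zA1 eyz) => /(subsetP sC) /set1P ->; rewrite eqxx ?orbT.
  case: spB => [g1 g2 g3 g4 g5 g6 g7 g8 g9 g10 g11 g12 g13 g14 g15].
  have [rS' cS'] := h5 S0.
  have sBB : forall z, z \in x :: sB -> z \in B by move=> z; rewrite inE => /orP[/eqP->//|/g13].
  have rn : r \notin x :: sB by apply/negP => /sBB; apply/negP.
  have gx : gpath e (r :: x :: sB) by apply: gpath_ext.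
  have Q : gpath e (rcons (rev sB) x ++ r :: s').
    apply: gpath_rcons_cat => //; first by rewrite -rev_cons; apply: gpath_rev.
      by rewrite esym.
    rewrite cat_uniq; apply/and3P; split.
    - by rewrite -rev_cons rev_uniq; case/andP: g12.
    - apply/hasPn => z zs.
      suff : z \notin x :: sB by rewrite mem_rcons !inE mem_rev.
      apply/negP => /sBB zB.
      move: zs; rewrite inE => /orP[/eqP zr|/h13 zA']; first by move: zB; rewrite zr (negbTE rB).
      by move: (A'B _ zA'); rewrite zB.
    - by case/andP: h12.
  have hQ := gpath_size Q.
  rewrite size_cat size_rcons size_rev /= in hQ.
  have key : 2 * #|C' :|: CB| + 3 * (size (l' ++ lB)).-1 <=
     2 * maxn (size s') (size sB).+1 + (size (l' ++ lB)).-1 * path_number e.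
    have -> : (size (l' ++ lB)).-1 = ((size l').-1 + (size lB).-1).+1.
      by rewrite size_cat predD.
    apply: ar2 h15 g15 _; first by rewrite cardsU leq_subr.
    exact: hQ.
  right; exists (C' :|: CB), (S' :|: SB), (l' ++ lB),
    (if (size sB).+1 <= size s' then s' else x :: sB); split.
  + by rewrite subUset (subset_trans h1 A'A) (subset_trans g1 BA).
  + by rewrite inE h2.
  + apply: covsplit; first by rewrite inE h2.
      by move=> y' z yA1 zA1 /(h3 _ _ yA1 zA1) /orP[] H; rewrite !inE H ?orbT.
    by move=> y' z yA1 zA1 /(g3 _ _ yA1 zA1) /orP[] H; rewrite !inE H ?orbT.
  + by rewrite subUset (subset_trans h4 A'A) (subset_trans g4 BA).
  + move=> _; split; first by rewrite inE rS'.
    move=> z; rewrite inE => /orP[zS|zS].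
      by apply: induced_mono (cS' _ zS); apply: subsetUl.
    have SB0 : SB != set0 by apply/set0Pn; exists z.
    have [xS cS] := g5 SB0.
    apply: connect_trans (connect1 (_ : induced e (S' :|: SB) r x)) _.
      by rewrite /induced !inE rS' xS orbT erx'.
    by apply: induced_mono (cS _ zS); apply: subsetUr.
  + by move/setP/(_ r); rewrite !inE rS'.
  + rewrite verts_cat cat_uniq h7 g7 andbT /=.
    apply/hasPn => z /g8 /andP[zB _]; apply/negP => /h8 /andP[zA' _].
    by move: (A'B _ zA'); rewrite zB.
  + move=> z; rewrite verts_cat mem_cat => /orP[/h8|/g8] /andP[zX zS];
      rewrite inE negb_or zS ?andbT /=.
    - rewrite subA //=; apply/negP => /(subsetP g4) zB.
      by move: (A'B _ zX); rewrite zB.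
    - rewrite subB //=; apply/negP => /(subsetP h4) zA'.
      by move: (A'B _ zA'); rewrite zX.
  + by move=> l; rewrite mem_cat => /orP[/h9|/g9].
  + move=> _ l; rewrite mem_cat => /orP[ll|ll].
      by have [y' yS ey] := h10 S0 l ll; exists y'; rewrite // inE yS.
    case: (eqVneq SB set0) => [SB0|SB0].
      have [_ [x0 lBE]] := g6 SB0; move: ll; rewrite lBE inE => /eqP -> /=.
      by exists r; rewrite // inE rS'.
    by have [y' yS ey] := g10 SB0 l ll; exists y'; rewrite // inE yS orbT.
  + by rewrite size_cat addn_gt0 h11.
  + by case: ifP.
  + case: ifP => _ z; first by move/h13/subA.
    by move/sBB/subB.
  + by case: ifP.
  + case: ifP => hle; move: key.
      by rewrite (maxn_idPl hle).
    by rewrite (maxn_idPr _) //= ltnW // ltnNge hle.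
Qed.
End Main.
Lemma ar3 c m h p k : 0 < m -> m <= k -> h.+1 <= p -> 2*c + 3*m.-1 <= 2*h + m.-1*p -> c <= ((k.+1)*p).+1 %/ 2.
Proof.
move=> m0 mk hp H.
have h1 : m.-1 * p <= k.-1 * p by apply: leq_mul => //; rewrite -!subn1 leq_sub2r.
have k0 : 0 < k by apply: leq_trans mk.
have h2 : k * p = k.-1 * p + p by rewrite -{1}(prednK k0) mulSn addnC.
rewrite mulSn h2.
lia.
Qed.
Lemma ar4 c p k : c <= 1 -> 2 <= p -> c <= ((k.+1)*p).+1 %/ 2.
Proof.
move=> c1 p2; apply: leq_trans c1 _.
have : 2 <= (k.+1 * p) by rewrite mulSn; apply: leq_trans p2 (leq_addr _ _).
lia.
Qed.

Theorem mainTheorem17 (T : finType) (e : rel T) :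
  simple_graph e -> connected_graph e ->
  tau e <= ceil_half ((dll e).+1 * path_number e).
Proof.
case=> esym eirr conn.
case: (pickP T) => [r _|T0]; last first.
  have vc : vertex_cover e set0 by apply/forallP => x; have := T0 x.
  by apply: leq_trans (tau_le vc) _; rewrite cards0.
have cA : forall z, z \in [set: T] -> connect (induced e [set: T]) r z.
  move=> z _; rewrite (@eq_connect _ _ e); first by move/forallP: conn => /(_ r)/forallP/(_ z).
  by move=> a b; rewrite /induced !inE.
case: (rooted_all esym eirr (leqnn #|[set: T]|) (in_setT r) cA) => [Tr|[C [S [legs [s sp]]]]].
  have vc : vertex_cover e set0.
    apply/forallP => a; apply/forallP => b; apply/implyP.
    have : a \in [set: T] by rewrite inE.
    have : b \in [set: T] by rewrite inE.
    by rewrite Tr => /set1P -> /set1P ->; rewrite eirr.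
  by apply: leq_trans (tau_le vc) _; rewrite cards0.
case: sp => [h1 h2 h3 h4 h5 h6 h7 h8 h9 h10 h11 h12 h13 h14 h15].
have vc : vertex_cover e C.
  by apply/forallP => a; apply/forallP => b; apply/implyP; apply: h3; rewrite inE.
apply: leq_trans (tau_le vc) _.
have hp := gpath_size h12.
rewrite /ceil_half.
case: (eqVneq S set0) => [S0|S0].
  have [sC _] := h6 S0.
  apply: ar4; first by rewrite -(cards1 r); apply: subset_leq_card.
  by apply: leq_trans hp; rewrite /= ltnS.
have [rS cS] := h5 S0.
have mi : minorb (@dll_edge (size legs)) e.
  apply: (spider_minor esym rS cS h7) => //.
    by move=> z /h8 /andP[].
  exact: h10.
have mT : size legs <= #|T|.
  have := max_card (mem (verts legs)); rewrite (card_uniqP h7) size_verts -addnn.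
  by move/(leq_trans (leq_addr _ _)).
apply: (ar3 h11 (dll_le mi mT) hp h15).
Qed.
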